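(* Let $A$ be a real $m\times m$ matrix, $f$ in the range of $A$, $y$ the minimal-norm solution of $Ay=f$. Fix $q\in(0,1)$, $C>1$, $\varepsilon\in(0,1)$. For each $\delta\in(0,1)$ let $f_\delta\in\mathbb{R}^m$ with $\|f_\delta-f\|\le\delta$, and let $n_\delta$ be the smallest integer $n\ge1$ with $\|AT_{q^{n}}^{-1}A^*f_\delta-f_\delta\|\le C\delta^\varepsilon$. Then $$\lim_{\delta\to0}\frac{\delta}{\sqrt{q^{n_\delta}}}=0.$$
   Context: $A^*$ is the transpose of $A$, $T:=A^*A$, $T_a:=T+aI$ for $a>0$; $\|\cdot\|$ is the Euclidean norm. *)

(* Defs.v *)
From Stdlib Require Import Reals Lra Lia.
Open Scope R_scope.

(* Vectors in R^m are functions nat -> R (only indices < m matter);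
   m x m matrices are functions nat -> nat -> R (only indices < m matter). *)
Definition vec := nat -> R.
Definition mat := nat -> nat -> R.

Fixpoint rsum (m : nat) (g : nat -> R) : R :=
  match m with
  | O => 0
  | S k => rsum k g + g k
  end.

Definition mv (m : nat) (A : mat) (x : vec) : vec :=
  fun i => rsum m (fun j => A i j * x j).

Definition tmv (m : nat) (A : mat) (x : vec) : vec :=
  fun i => rsum m (fun j => A j i * x j).

Definition Tmat (m : nat) (A : mat) : mat :=
  fun i j => rsum m (fun k => A k i * A k j).

Definition vnorm (m : nat) (x : vec) : R := sqrt (rsum m (fun i => x i ^ 2)).

Definition vsub (x y : vec) : vec := fun i => x i - y i.

(* x = T_a^{-1} A^* g, i.e. (T + a I) x = A^* g (T_a is invertible for a > 0,
   so x is uniquely determined on indices < m). *)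
Definition is_Ta_inv_Astar (m : nat) (A : mat) (a : R) (g x : vec) : Prop :=
  forall i, (i < m)%nat -> rsum m (fun j => Tmat m A i j * x j) + a * x i = tmv m A g i.

Definition min_norm_solution (m : nat) (A : mat) (f y : vec) : Prop :=
  (forall i, (i < m)%nat -> mv m A y i = f i) /\
  (forall z : vec, (forall i, (i < m)%nat -> mv m A z i = f i) -> vnorm m y <= vnorm m z).

Definition in_range (m : nat) (A : mat) (f : vec) : Prop :=
  exists z : vec, forall i, (i < m)%nat -> mv m A z i = f i.

Definition discrepancy_ok (m : nat) (A : mat) (q C eps delta : R) (fd : vec) (n : nat) : Prop :=
  exists x : vec, is_Ta_inv_Astar m A (q ^ n) fd x /\
    vnorm m (vsub (mv m A x) fd) <= C * Rpower delta eps.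

(* Main.v *)
Require Import Defs.
From Stdlib Require Import Reals Lra Lia Psatz.
Open Scope R_scope.

Lemma rsum_ext n f g : (forall i, (i < n)%nat -> f i = g i) -> rsum n f = rsum n g.
Proof. induction n; simpl; intros H; auto. rewrite IHn by (intros; apply H; lia). rewrite H by lia. ring. Qed.

Lemma rsum_plus n f g : rsum n (fun i => f i + g i) = rsum n f + rsum n g.
Proof. induction n; simpl; [ring|rewrite IHn; ring]. Qed.

Lemma rsum_scal n c f : rsum n (fun i => c * f i) = c * rsum n f.
Proof. induction n; simpl; [ring|rewrite IHn; ring]. Qed.

Lemma rsum_zero n : rsum n (fun _ => 0) = 0.
Proof. induction n; simpl; [ring|rewrite IHn; ring]. Qed.

Lemma rsum_le n f g : (forall i, (i < n)%nat -> f i <= g i) -> rsum n f <= rsum n g.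
Proof. induction n; simpl; intros H; [lra|]. assert (H1 := H n ltac:(lia)). assert (rsum n f <= rsum n g) by (apply IHn; intros; apply H; lia). lra. Qed.

Lemma rsum_swap n p F : rsum n (fun i => rsum p (fun j => F i j)) = rsum p (fun j => rsum n (fun i => F i j)).
Proof. induction n; simpl. - rewrite rsum_zero; auto. - rewrite IHn, <- rsum_plus. auto. Qed.

Lemma rsum_lin n a b f g : rsum n (fun i => a * f i + b * g i) = a * rsum n f + b * rsum n g.
Proof. rewrite rsum_plus, !rsum_scal. auto. Qed.

Lemma rsum_sq_nonneg n x : 0 <= rsum n (fun i => x i ^ 2).
Proof. induction n; cbn [rsum]. lra. assert (0 <= x n ^ 2) by apply pow2_ge_0. lra. Qed.

Lemma rsum_sq_zero n x : rsum n (fun i => x i ^ 2) <= 0 -> forall i, (i < n)%nat -> x i = 0.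
Proof. induction n; cbn [rsum]; intros H i Hi; [lia|].
  assert (H0 := rsum_sq_nonneg n x).
  destruct (Nat.eq_dec i n). subst. nra. apply IHn; [nra|lia]. Qed.

Lemma Tmat_mv m A x i : rsum m (fun j => Tmat m A i j * x j) = tmv m A (mv m A x) i.
Proof. unfold Tmat, tmv, mv.
  transitivity (rsum m (fun j => rsum m (fun k => A k i * (A k j * x j)))).
  { apply rsum_ext; intros j _. rewrite Rmult_comm, <- rsum_scal. apply rsum_ext; intros; ring. }
  rewrite rsum_swap. apply rsum_ext; intros k _. rewrite <- rsum_scal. auto. Qed.

Lemma adjoint m A u v : rsum m (fun i => u i * tmv m A v i) = rsum m (fun k => mv m A u k * v k).
Proof. unfold tmv, mv.
  transitivity (rsum m (fun i => rsum m (fun k => u i * A k i * v k))).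
  { apply rsum_ext; intros i _. rewrite <- rsum_scal. apply rsum_ext; intros; ring. }
  rewrite rsum_swap. apply rsum_ext; intros k _. rewrite Rmult_comm, <- rsum_scal. apply rsum_ext; intros; ring. Qed.

Lemma rsum_delta m a x i : (i < m)%nat -> rsum m (fun j => (if Nat.eqb i j then a else 0) * x j) = a * x i.
Proof. induction m; simpl; intros Hi; [lia|].
  destruct (Nat.eq_dec i m).
  - subst. rewrite Nat.eqb_refl. rewrite (rsum_ext _ _ (fun _ => 0)), rsum_zero. ring.
    intros j Hj. destruct (Nat.eqb m j) eqn:E; [apply Nat.eqb_eq in E; lia| ring].
  - rewrite IHm by lia. destruct (Nat.eqb i m) eqn:E; [apply Nat.eqb_eq in E; lia| ring].
Qed.

Definition quad m (M : mat) (x : vec) := rsum m (fun i => x i * rsum m (fun j => M i j * x j)).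

Lemma solve_pd m : forall (M : mat) (b : vec),
  (forall i j, (i < m)%nat -> (j < m)%nat -> M i j = M j i) ->
  (forall x : vec, quad m M x <= 0 -> forall i, (i < m)%nat -> x i = 0) ->
  exists x : vec, forall i, (i < m)%nat -> rsum m (fun j => M i j * x j) = b i.
Proof.
  induction m as [|k IH]; intros M b Hs Hp.
  { exists (fun _ => 0). intros; lia. }
  set (d := M k k).
  assert (Hd : 0 < d).
  { destruct (Rle_lt_dec d 0) as [Hle|]; auto. exfalso.
    set (e := fun j => if Nat.eqb j k then 1 else 0).
    assert (Hq : quad (S k) M e = d).
    { unfold quad. cbn [rsum].
      rewrite (rsum_ext k _ (fun _ => 0)). rewrite rsum_zero.
      rewrite (rsum_ext k (fun j => M k j * e j) (fun _ => 0)). rewrite rsum_zero.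
      unfold e. rewrite Nat.eqb_refl. unfold d. ring.
      intros j Hj. unfold e. destruct (Nat.eqb j k) eqn:E; [apply Nat.eqb_eq in E; lia|ring].
      intros j Hj. unfold e. destruct (Nat.eqb j k) eqn:E; [apply Nat.eqb_eq in E; lia|ring]. }
    assert (H := Hp e ltac:(lra) k ltac:(lia)). unfold e in H. rewrite Nat.eqb_refl in H. lra. }
  set (M' := fun i j => M i j - M i k * M k j / d).
  set (b' := fun i => b i - M i k * b k / d).
  assert (Hexp : forall x' i, rsum k (fun j => M' i j * x' j) =
     rsum k (fun j => M i j * x' j) - M i k / d * rsum k (fun j => M k j * x' j)).
  { intros x' i. transitivity (1 * rsum k (fun j => M i j * x' j) + (- (M i k / d)) * rsum k (fun j => M k j * x' j)); [|ring].
    rewrite <- rsum_lin. apply rsum_ext; intros. unfold M'. field. lra. }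
  assert (Hsym : forall x', rsum k (fun i => x' i * M i k) = rsum k (fun j => M k j * x' j)).
  { intros. apply rsum_ext; intros. rewrite Hs by lia. ring. }
  destruct (IH M' b') as [x' Hx'].
  { intros i j Hi Hj. unfold M'. rewrite (Hs i j), (Hs i k), (Hs k j) by lia. field. lra. }
  { intros x' Hq i Hi.
    set (u := rsum k (fun j => M k j * x' j)).
    set (z := fun j => if Nat.ltb j k then x' j else - u / d).
    assert (Hz : quad (S k) M z = quad k M' x').
    { unfold quad. cbn [rsum].
      assert (Hin : forall i, rsum k (fun j => M i j * z j) = rsum k (fun j => M i j * x' j)).
      { intros i0. apply rsum_ext; intros j Hj. unfold z. destruct (Nat.ltb j k) eqn:E; auto. apply Nat.ltb_ge in E; lia. }
      assert (Hzk : z k = - u / d). { unfold z. rewrite Nat.ltb_irrefl. auto. }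
      set (Q := rsum k (fun i0 => x' i0 * rsum k (fun j => M i0 j * x' j))).
      transitivity (Q - u * u / d).
      { rewrite (rsum_ext k _ (fun i0 => 1 * (x' i0 * rsum k (fun j => M i0 j * x' j)) + (- u / d) * (x' i0 * M i0 k))).
        2:{ intros i0 Hi0. rewrite Hin, Hzk. unfold z. destruct (Nat.ltb i0 k) eqn:E; [ring|apply Nat.ltb_ge in E; lia]. }
        rewrite rsum_lin, Hsym. fold u. fold Q. rewrite Hin, Hzk. fold u. fold d. field. lra. }
      { rewrite (rsum_ext k _ (fun i0 => 1 * (x' i0 * rsum k (fun j => M i0 j * x' j)) + (- u / d) * (x' i0 * M i0 k))).
        2:{ intros i0 Hi0. rewrite Hexp. fold u. field. lra. }
        rewrite rsum_lin, Hsym. fold u. fold Q. field. lra. } }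
    assert (H := Hp z ltac:(lra) i ltac:(lia)). unfold z in H.
    destruct (Nat.ltb i k) eqn:E; auto. apply Nat.ltb_ge in E; lia. }
  set (u := rsum k (fun j => M k j * x' j)).
  exists (fun j => if Nat.ltb j k then x' j else (b k - u) / d).
  intros i Hi. cbn [rsum]. rewrite Nat.ltb_irrefl.
  rewrite (rsum_ext k _ (fun j => M i j * x' j)).
  2:{ intros j Hj. destruct (Nat.ltb j k) eqn:E; auto. apply Nat.ltb_ge in E; lia. }
  destruct (Nat.eq_dec i k).
  - subst i. fold u. fold d. field. lra.
  - assert (H := Hx' i ltac:(lia)). rewrite Hexp in H. fold u in H. unfold b' in H.
    assert (rsum k (fun j => M i j * x' j) = b i - M i k * b k / d + M i k / d * u) by lra.
    rewrite H0. field. lra.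
Qed.

Lemma Ta_exists m A a g : 0 < a -> exists x, is_Ta_inv_Astar m A a g x.
Proof.
  intros Ha.
  set (M := fun i j => Tmat m A i j + (if Nat.eqb i j then a else 0)).
  assert (HM : forall x i, (i < m)%nat -> rsum m (fun j => M i j * x j) = rsum m (fun j => Tmat m A i j * x j) + a * x i).
  { intros x i Hi. rewrite <- (rsum_delta m a x i) by auto. rewrite <- rsum_plus.
    apply rsum_ext; intros. unfold M. ring. }
  destruct (solve_pd m M (tmv m A g)) as [x Hx].
  { intros i j _ _. unfold M, Tmat. rewrite Nat.eqb_sym. f_equal. apply rsum_ext; intros; ring. }
  { intros x Hq i Hi. apply (rsum_sq_zero m x); auto.
    unfold quad in Hq.
    rewrite (rsum_ext m _ (fun i => 1 * (x i * tmv m A (mv m A x) i) + a * (x i ^ 2))) in Hq.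
    2:{ intros i0 Hi0. rewrite HM, Tmat_mv by auto. ring. }
    rewrite rsum_lin, adjoint in Hq.
    assert (H0 := rsum_sq_nonneg m (mv m A x)).
    rewrite (rsum_ext m (fun i => mv m A x i * mv m A x i) (fun i => mv m A x i ^ 2)) in Hq by (intros; ring).
    nra. }
  exists x. intros i Hi. rewrite <- HM by auto. auto.
Qed.

Lemma resid_bound m A a g f y x : 0 < a -> is_Ta_inv_Astar m A a g x ->
  (forall i, (i < m)%nat -> mv m A y i = f i) ->
  rsum m (fun i => vsub (mv m A x) g i ^ 2) <=
  rsum m (fun i => vsub g f i ^ 2) + a * rsum m (fun i => y i ^ 2) / 2.
Proof.
  intros Ha Hx Hy.
  set (r := fun i => g i - mv m A x i).
  assert (Hr : forall i, (i < m)%nat -> a * x i = tmv m A r i).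
  { intros i Hi. specialize (Hx i Hi). rewrite Tmat_mv in Hx.
    unfold r. transitivity (1 * tmv m A g i + (-1) * tmv m A (mv m A x) i); [lra|].
    unfold tmv. rewrite <- rsum_lin. apply rsum_ext; intros; ring. }
  set (Sr := rsum m (fun i => r i ^ 2)).
  assert (E0 : rsum m (fun i => vsub (mv m A x) g i ^ 2) = Sr).
  { apply rsum_ext; intros. unfold vsub, r. ring. }
  rewrite E0.
  set (e := fun i => g i - f i).
  assert (F1 : Sr = rsum m (fun i => r i * e i) + (rsum m (fun i => r i * mv m A y i) - rsum m (fun i => r i * mv m A x i))).
  { unfold Rminus. rewrite <- (Rmult_1_l (rsum m (fun i => r i * mv m A x i))), Ropp_mult_distr_l.
    rewrite <- (Rmult_1_l (rsum m (fun i => r i * mv m A y i))).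
    rewrite <- rsum_lin, <- rsum_plus. apply rsum_ext; intros i Hi. rewrite Hy by auto. unfold e, r. ring. }
  assert (F2 : rsum m (fun i => r i * mv m A y i) = a * rsum m (fun i => x i * y i)).
  { rewrite <- rsum_scal. transitivity (rsum m (fun k => mv m A y k * r k)). apply rsum_ext; intros; ring.
    rewrite <- adjoint. apply rsum_ext; intros. rewrite <- Hr by auto. ring. }
  assert (F3 : rsum m (fun i => r i * mv m A x i) = a * rsum m (fun i => x i ^ 2)).
  { rewrite <- rsum_scal. transitivity (rsum m (fun k => mv m A x k * r k)). apply rsum_ext; intros; ring.
    rewrite <- adjoint. apply rsum_ext; intros. rewrite <- Hr by auto. ring. }
  assert (F4 : rsum m (fun i => r i * e i) <= / 2 * Sr + / 2 * rsum m (fun i => vsub g f i ^ 2)).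
  { unfold Sr. rewrite <- rsum_lin. apply rsum_le; intros. unfold vsub. fold (e i).
    assert (0 <= (r i - e i) ^ 2) by apply pow2_ge_0. nra. }
  assert (F5 : rsum m (fun i => x i * y i) <= 1 * rsum m (fun i => x i ^ 2) + / 4 * rsum m (fun i => y i ^ 2)).
  { rewrite <- rsum_lin. apply rsum_le; intros.
    assert (0 <= (x i - y i / 2) ^ 2) by apply pow2_ge_0. nra. }
  nra.
Qed.

Lemma Rpower_pos x e : 0 < Rpower x e.
Proof. unfold Rpower. apply exp_pos. Qed.

Lemma Rpower_le1 x e : 0 < x < 1 -> 0 <= e -> Rpower x e <= 1.
Proof. intros Hx He.
  replace 1 with (Rpower 1 e) at 1 by (unfold Rpower; rewrite ln_1, Rmult_0_r, exp_0; auto).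
  apply Rle_Rpower_l; lra. Qed.

Lemma sq_sqrt_lt a b : 0 <= a -> a < sqrt b -> a ^ 2 < b.
Proof. intros Ha H. assert (0 <= b). { destruct (Rle_lt_dec 0 b); auto. rewrite sqrt_neg_0 in H; lra. }
  assert (sqrt b * sqrt b = b) by (apply sqrt_sqrt; auto). nra. Qed.

Lemma sqrt_le_sq a b : 0 <= b -> sqrt a <= b -> a <= b ^ 2.
Proof. intros Hb H. destruct (Rle_lt_dec 0 a). assert (sqrt a * sqrt a = a) by (apply sqrt_sqrt; auto).
  assert (0 <= sqrt a) by apply sqrt_pos. nra. nra. Qed.

Theorem lemma3p5 (m : nat) (A : mat) (f y : vec)
  (hf : in_range m A f) (hy : min_norm_solution m A f y)
  (q C eps : R) (hq : 0 < q < 1) (hC : 1 < C) (heps : 0 < eps < 1)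
  (fd : R -> vec)
  (hfd : forall delta, 0 < delta < 1 -> vnorm m (vsub (fd delta) f) <= delta)
  (nd : R -> nat)
  (hnd : forall delta, 0 < delta < 1 ->
     (1 <= nd delta)%nat /\
     discrepancy_ok m A q C eps delta (fd delta) (nd delta) /\
     (forall n, (1 <= n)%nat -> (n < nd delta)%nat ->
        ~ discrepancy_ok m A q C eps delta (fd delta) n)) :
  limit1_in (fun delta => delta / sqrt (q ^ nd delta)) (fun delta => 0 < delta < 1) 0 0.
Proof.
  set (Y := rsum m (fun i => y i ^ 2)).
  assert (HY : 0 <= Y) by apply rsum_sq_nonneg.
  set (K := / q + Y / (2 * q * (C ^ 2 - 1))).
  assert (HC2 : 0 < C ^ 2 - 1) by nra.
  assert (HK : 0 <= K). { unfold K. assert (0 < / q) by (apply Rinv_0_lt_compat; lra).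
    assert (0 <= Y / (2 * q * (C ^ 2 - 1))) by (apply Rle_mult_inv_pos; [lra| nra]). lra. }
  assert (Key : forall d, 0 < d < 1 -> d ^ 2 <= K * Rpower d (1 - eps) ^ 2 * q ^ nd d).
  { intros d Hd. destruct (hnd d Hd) as [H1 [_ H3]].
    set (D := Rpower d eps). set (E := Rpower d (1 - eps)).
    assert (HDE : d = D * E). { unfold D, E. rewrite <- Rpower_plus. replace (eps + (1 - eps)) with 1 by ring. rewrite Rpower_1; lra. }
    assert (HD0 : 0 < D) by apply Rpower_pos. assert (HE0 : 0 < E) by apply Rpower_pos.
    assert (HD1 : D <= 1) by (apply Rpower_le1; lra). assert (HE1 : E <= 1) by (apply Rpower_le1; lra).
    assert (Hqn : forall n, 0 < q ^ n) by (intros; apply pow_lt; lra).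
    assert (HDdef : D = Rpower d eps) by reflexivity.
    clearbody D E.
    destruct (nd d) as [|[|k]] eqn:En; [lia| |].
    - 
      assert (0 <= Y / (2 * q * (C ^ 2 - 1))) by (apply Rle_mult_inv_pos; [lra| nra]).
      set (Z := Y / (2 * q * (C ^ 2 - 1))) in *. clearbody Z.
      assert (D * D <= 1 * 1) by (apply Rmult_le_compat; lra).
      assert (0 <= E * E) by nra.
      unfold K. rewrite HDE.
      replace ((/ q + Z) * E ^ 2 * q ^ 1) with (E * E + Z * q * (E * E)) by (simpl; field; lra).
      assert (0 <= Z * q * (E * E)) by (apply Rmult_le_pos; nra).
      assert (D * D * (E * E) <= 1 * 1 * (E * E)) by (apply Rmult_le_compat_r; lra).
      replace ((D * E) ^ 2) with (D * D * (E * E)) by ring. lra.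
    - set (a' := q ^ S k).
      destruct (Ta_exists m A a' (fd d) (Hqn _)) as [x Hx].
      assert (Hn : ~ (vnorm m (vsub (mv m A x) (fd d)) <= C * D)).
      { intros Hc. apply (H3 (S k)); [lia|lia|]. exists x. split; auto. rewrite <- HDdef; auto. }
      apply Rnot_le_lt in Hn. unfold vnorm in Hn.
      apply sq_sqrt_lt in Hn; [|nra].
      assert (Hb := resid_bound m A a' (fd d) f y x (Hqn _) Hx (proj1 hy)). fold Y in Hb.
      assert (He := hfd d Hd). unfold vnorm in He. apply sqrt_le_sq in He; [|lra].
      assert (HdD : d <= D) by (rewrite HDE; nra).
      assert (Hk : D ^ 2 * (C ^ 2 - 1) < a' * Y / 2) by nra.
      assert (Hqq : q ^ S (S k) = q * a') by (unfold a'; simpl; ring).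
      rewrite Hqq, HDE. unfold K.
      assert (Hex : (/ q + Y / (2 * q * (C ^ 2 - 1))) * E ^ 2 * (q * a') = E^2 * a' + E ^ 2 * (a' * Y / 2) / (C ^ 2 - 1)) by (field; lra).
      rewrite Hex.
      assert (D ^ 2 <= (a' * Y / 2) / (C ^ 2 - 1)). { apply Rmult_le_reg_r with (C ^ 2 - 1); auto. field_simplify; lra. }
      assert (0 <= E ^ 2 * a') by (specialize (Hqn (S k)); fold a' in Hqn; nra).
      assert (E ^ 2 * D ^ 2 <= E ^ 2 * ((a' * Y / 2) / (C ^ 2 - 1))) by (apply Rmult_le_compat_l; nra).
      replace ((D * E) ^ 2) with (E ^ 2 * D ^ 2) by ring. unfold Rdiv in *. nra. }
  unfold limit1_in, limit_in. simpl. intros e0 He0.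
  set (s := sqrt K).
  assert (Hs : 0 <= s) by apply sqrt_pos. assert (Hss : s * s = K) by (apply sqrt_sqrt; auto).
  set (t := e0 / (s + 1)). assert (Ht : 0 < t) by (unfold t; apply Rdiv_lt_0_compat; lra).
  exists (Rmin 1 (Rpower t (/ (1 - eps)))). split.
  { apply Rmin_pos; [lra| apply Rpower_pos]. }
  intros d [Hd Hdist]. simpl in Hdist |- *. unfold R_dist in *. rewrite Rminus_0_r in *.
  rewrite Rabs_pos_eq in Hdist by lra.
  assert (Hd2 : d < Rpower t (/ (1 - eps))) by (eapply Rlt_le_trans; [exact Hdist| apply Rmin_r]).
  assert (HE : Rpower d (1 - eps) < t).
  { replace t with (Rpower (Rpower t (/ (1 - eps))) (1 - eps)).
    apply Rlt_Rpower_l; lra.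
    rewrite Rpower_mult. replace (/ (1 - eps) * (1 - eps)) with 1 by (field; lra). apply Rpower_1; auto. }
  set (E := Rpower d (1 - eps)). fold E in HE.
  assert (HE0 : 0 < E) by apply Rpower_pos.
  assert (Hk := Key d Hd). fold E in Hk.
  set (n := nd d). fold n in Hk.
  assert (Hqn : 0 < q ^ n) by (apply pow_lt; lra).
  set (w := sqrt (q ^ n)). assert (Hw : 0 < w) by (apply sqrt_lt_R0; auto).
  assert (Hww : w * w = q ^ n) by (apply sqrt_sqrt; lra).
  set (v := d / w). assert (Hv : 0 < v) by (apply Rdiv_lt_0_compat; lra).
  assert (Hdv : d = v * w) by (unfold v; field; lra).
  rewrite Rabs_pos_eq by lra. fold n. fold w. fold v.
  assert (Hv2 : v * v <= (s * E) * (s * E)).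
  { rewrite Hdv, <- Hww, <- Hss in Hk. apply Rmult_le_reg_r with (w * w); nra. }
  assert (HsE : s * E <= s * t) by (apply Rmult_le_compat_l; lra).
  assert (Hst : s * t < e0) by (unfold t; apply Rmult_lt_reg_r with (s+1); [lra|]; field_simplify; nra).
  assert (0 <= s * E) by (apply Rmult_le_pos; lra).
  destruct (Rlt_le_dec v e0) as [Hlt|Hge]; auto. exfalso.
  assert (e0 * e0 <= v * v) by (apply Rmult_le_compat; lra).
  assert ((s * E) * (s * E) < e0 * e0) by (apply Rmult_le_0_lt_compat; lra).
  lra.
Qed.
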